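(* Let $A$ be a distributive meet-complemented lattice in which $\Box x$ and $\Diamond x$ exist for every $x\in A$ and such that $\Box a\le\Box\Box a$ for all $a\in A$. Then for every $a\in A$: (i) $\Diamond\neg\Box a=\neg\Box a$; (ii) $\neg\neg\Diamond a\le\Diamond a$; (iii) $\neg\Box\neg a\le\Diamond a$; (iv) $\Diamond a=\neg\Box\neg a$.
   Context: A meet-complemented lattice is a lattice $(L,\le)$ such that for every $a\in L$ the element $\neg a=\max\{b\in L: a\wedge b\le c\ \text{for all } c\in L\}$ exists; it is bounded with bottom $0$ and top $1$. For $a\in L$, $\Box a=\max\{b\in L: a\vee\neg b=1\}$ and $\Diamond a=\min\{b\in L: \neg a\vee b=1\}$. *)

(* Defs.v *)
From HB Require Import structures.
From mathcomp Require Import all_boot all_order.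
Set Implicit Arguments. Unset Strict Implicit. Unset Printing Implicit Defensive.
Import Order.TTheory.
Local Open Scope order_scope.

Definition is_max (d : Order.disp_t) (T : porderType d) (P : T -> Prop) (m : T) : Prop :=
  P m /\ forall b, P b -> b <= m.

Definition is_min (d : Order.disp_t) (T : porderType d) (P : T -> Prop) (m : T) : Prop :=
  P m /\ forall b, P b -> m <= b.

(* Main.v *)
Require Import Defs.
From HB Require Import structures.
From mathcomp Require Import all_boot all_order.
Import Order.TTheory.
Local Open Scope order_scope.

Section H.
Variables (d : Order.disp_t) (A : tbDistrLatticeType d).

Lemma topP (x : A) : \top <= x -> x = \top.
Proof. by move=> h; apply/eqP; rewrite eq_le lex1. Qed.

Lemma keyD (z u v : A) : z `&` u = \bot -> u `|` v = \top -> z <= v.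
Proof.
move=> zu uv.
have -> : z = z `&` (u `|` v) by rewrite uv meetx1.
by rewrite meetUr zu join0x leIr.
Qed.
End H.

Theorem proposition23 (d : Order.disp_t) (A : tbDistrLatticeType d)
  (neg box dia : A -> A)
  (Hneg : forall a : A, is_max (fun b : A => forall c : A, a `&` b <= c) (neg a))
  (Hbox : forall a : A, is_max (fun b : A => a `|` neg b = \top) (box a))
  (Hdia : forall a : A, is_min (fun b : A => neg a `|` b = \top) (dia a))
  (H4 : forall a : A, box a <= box (box a)) :
  forall a : A,
    [/\ dia (neg (box a)) = neg (box a),
        neg (neg (dia a)) <= dia a,
        neg (box (neg a)) <= dia a &
        dia a = neg (box (neg a))].
Proof.
have L2 : forall x : A, x `&` neg x = \bot.
  by move=> x; apply/eqP; rewrite eq_le le0x andbT; apply: (proj1 (Hneg x)).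
have L2' : forall x : A, neg x `&` x = \bot by move=> x; rewrite meetC.
have L1 : forall x b : A, x `&` b = \bot -> b <= neg x.
  by move=> x b h; apply: (proj2 (Hneg x)) => c; rewrite h le0x.
have L3 : forall x : A, x <= neg (neg x) by move=> x; apply: L1; exact: L2'.
have L4 : forall x y : A, x <= y -> neg y <= neg x.
  move=> x y xy; apply: L1; apply/eqP; rewrite eq_le le0x andbT.
  by rewrite -(L2 y); apply: leI2.
have L5 : forall x : A, x `|` neg x = \top -> neg (neg x) <= x.
  by move=> x h; apply: (@keyD _ _ _ (neg x)) => //; rewrite joinC.
have BC : forall x : A, box x `|` neg (box x) = \top.
  move=> x; apply: topP; rewrite -(proj1 (Hbox (box x))).
  by apply: leU2 => //; apply: L4.
move=> a; set m := dia a.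
have Hm : neg a `|` m = \top := proj1 (Hdia a).
set k := box m.
have ak : a <= k by apply: (proj2 (Hbox m)); rewrite joinC.
have km : k <= m.
  apply: (@keyD _ _ _ (neg k)); first exact: L2.
  by rewrite joinC; exact: (proj1 (Hbox m)).
have mk : m <= k.
  apply: (proj2 (Hdia a)); apply: topP; rewrite -(BC m) joinC.
  by apply: leU2 => //; apply: L4.
have mkE : m = k by apply/le_anti; rewrite mk km.
have Mc : m `|` neg m = \top by rewrite mkE; exact: BC.
have ii : neg (neg m) <= m := L5 _ Mc.
set y := box (neg a).
have my : m <= neg y by apply: (proj2 (Hdia a)); exact: (proj1 (Hbox (neg a))).
have ny : neg m <= y.
  apply: (proj2 (Hbox (neg a))); apply: topP; rewrite -Hm.
  by apply: leU2 => //; apply: L3.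
have iii : neg y <= m by apply: le_trans (ii); apply: L4.
split => //; last by apply/le_anti; rewrite my iii.
set n := neg (box a).
have nn : neg n `|` n = \top.
  apply: topP; rewrite -(BC a); apply: leU2 => //; exact: L3.
apply/le_anti; apply/andP; split; first exact: (proj2 (Hdia n) _ nn).
by apply: (@keyD _ _ _ (neg n)) => //; exact: (proj1 (Hdia n)).
Qed.
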